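(* Let $\sigma$ be the sign function on $\mathbb{R}$ (with $\sigma(0)=0$). For $\varepsilon>0$ and $\Phi\in\mathscr{C}_c^\infty(\mathbb{R}^2)$ define $$Kir_\varepsilon\Phi(x)=\big(\varepsilon\sigma(x)\mathcal{X}_{\{|x|\le\varepsilon\}}(x)+x\mathcal{X}_{\{|x|>\varepsilon\}}(x)\big)\int_{\{y:|x-y|>\varepsilon\}}\Phi(x,y)\frac{dy}{x-y},$$ which is the Kirchhoff divergence of $\Phi$ with respect to the distribution $T_\varepsilon$ induced by the function $h^\varepsilon(x)=\frac1x\mathcal{X}_{\{|x|>\varepsilon\}}(x)+\frac{\sigma(x)}{\varepsilon}\mathcal{X}_{[-\varepsilon,\varepsilon]}(x)$ and $\langle\!\langle S_\varepsilon,\Theta\rangle\!\rangle=\iint_{\{|x-y|>\varepsilon\}}\frac{\Theta(x,y)}{x-y}\,dx\,dy$. Then: (i) $Kir_\varepsilon\Phi(x)\to xH_y\Phi(x,x)$ as $\varepsilon\to0$, for every $x\in\mathbb{R}$; (ii) for $T=\mathrm{p.v.}\frac1x$ and $\langle\!\langle S,\Theta\rangle\!\rangle=\int_{\mathbb{R}}H_y\Theta(x,x)\,dx$, $\Theta\in\mathscr{C}_c^\infty(\mathbb{R}^2)$, the function $\psi(x)=xH_y\Phi(x,x)$ is the Kirchhoff divergence: $\langle T,\varphi\psi\rangle=\langle\!\langle S,\varphi\Phi\rangle\!\rangle$ for every $\varphi\in\mathscr{C}_c^\infty(\mathbb{R})$.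
   Context: $\langle\mathrm{p.v.}\frac1x,\varphi\rangle=\lim_{\varepsilon\to0}\int_{|x|>\varepsilon}\frac{\varphi(x)}{x}dx$. For a function $\Theta(x,y)$, $H_y\Theta(x,z)=\lim_{\varepsilon\to0}\int_{|z-y|>\varepsilon}\frac{\Theta(x,y)}{z-y}dy$ is the Hilbert transform of $y\mapsto\Theta(x,y)$ evaluated at $z$. $(\varphi\Phi)(x,y)=\varphi(x)\Phi(x,y)$. *)

(* Defs.v *)
From HB Require Import structures.
From mathcomp Require Import all_boot all_order all_algebra.
From mathcomp Require Import all_classical all_reals all_analysis.
Set Implicit Arguments. Unset Strict Implicit. Unset Printing Implicit Defensive.
Import Order.TTheory GRing.Theory Num.Theory.
Import numFieldNormedType.Exports.
Local Open Scope classical_set_scope.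
Local Open Scope ring_scope.

Section Defs.
Variable R : realType.
Local Notation mu := (@lebesgue_measure R).

(* iterated partial derivatives of a function of two real variables;
   true = derivative in the first variable, false = in the second *)
Fixpoint pderiv (l : seq bool) (f : R -> R -> R) : R -> R -> R :=
  match l with
  | [::] => f
  | b :: l' => let g := pderiv l' f in
     if b then (fun x y => derive1 (fun t => g t y) x)
     else (fun x y => derive1 (fun t => g x t) y)
  end.

Definition smooth2 (f : R -> R -> R) : Prop :=
  forall l : seq bool,
    (forall x y, derivable (fun t => pderiv l f t y) x 1 /\
                 derivable (fun t => pderiv l f x t) y 1) /\
    continuous (fun p : R * R => pderiv l f p.1 p.2).

Definition test2 (f : R -> R -> R) : Prop :=
  smooth2 f /\ exists M : R, forall x y, M < `|x| \/ M < `|y| -> f x y = 0.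

(* C^infty(R): all derivatives exist (hence are continuous) *)
Definition smooth1 (f : R -> R) : Prop :=
  forall (n : nat) (x : R), derivable (derive1n n f) x 1.

Definition test1 (f : R -> R) : Prop :=
  smooth1 f /\ exists M : R, forall x, M < `|x| -> f x = 0.

Definition pv_inv (phi : R -> R) : R :=
  lim ((fun e => \int[mu]_(x in [set x | e < `|x|]) (phi x / x)) @ 0^'+).

Definition hilbert_y (Th : R -> R -> R) (x z : R) : R :=
  lim ((fun e => \int[mu]_(y in [set y | e < `|z - y|]) (Th x y / (z - y)))
         @ 0^'+).

Definition S_pairing (Th : R -> R -> R) : R :=
  \int[mu]_(x in [set: R]) hilbert_y Th x x.

Definition Kir (e : R) (Phi : R -> R -> R) (x : R) : R :=
  (if `|x| <= e then e * Num.sg x else x) *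
  \int[mu]_(y in [set y | e < `|x - y|]) (Phi x y / (x - y)).

End Defs.

(* Main.v *)
Require Import Defs.
From HB Require Import structures.
From mathcomp Require Import all_boot all_order all_algebra.
From mathcomp Require Import all_classical all_reals all_analysis.
From mathcomp Require Import ring lra measurable_realfun.
Set Implicit Arguments. Unset Strict Implicit. Unset Printing Implicit Defensive.
Import Order.TTheory GRing.Theory Num.Theory.
Import numFieldNormedType.Exports.
Local Open Scope classical_set_scope.
Local Open Scope ring_scope.


Section Helpers.
Variable R : realType.
Local Notation mu := (@lebesgue_measure R).

Lemma bound2 (f : R * R -> R) (c : R) : continuous f ->
  exists K, 0 <= K /\ forall x y, `|x| <= c -> `|y| <= c -> `|f (x, y)| <= K.
Proof.
move=> cf.
have cK : compact (`[-c, c] `*` `[-c, c]) by apply: compact_setX; exact: segment_compact.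
have := continuous_compact (continuous_subspaceT cf) cK.
move/compact_bounded => [N [_ HN]].
exists (`|N| + 1); split; first by rewrite addr_ge0.
move=> x y xc yc; apply: (HN (`|N| + 1)); first by rewrite (le_lt_trans (ler_norm N)) // ltrDl.
exists (x, y) => //; split => /=; rewrite in_itv /= -ler_norml //.
Qed.

Lemma bound1 (f : R -> R) (c : R) : (forall x, `|x| <= c -> {for x, continuous f}) ->
  exists K, 0 <= K /\ forall x, `|x| <= c -> `|f x| <= K.
Proof.
move=> cf0.
have cf : {in (`[-c, c]%classic : set R), continuous f}.
  by move=> x; rewrite inE /= in_itv /= -ler_norml; exact: cf0.
have := continuous_compact (continuous_in_subspaceT cf) (@segment_compact _ (-c) c).
move/compact_bounded => [N [_ HN]].
exists (`|N| + 1); split; first by rewrite addr_ge0.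
move=> x xc; apply: (HN (`|N| + 1)); first by rewrite (le_lt_trans (ler_norm N)) // ltrDl.
by exists x => //; rewrite /= in_itv /= -ler_norml.
Qed.

Lemma int_bdd (A : set R) (f : R -> R) (K r : R) : measurable A -> measurable_fun A f ->
  (forall y, A y -> `|f y| <= K) -> (forall y, A y -> r < `|y| -> f y = 0) ->
  mu.-integrable A (EFin \o f).
Proof.
move=> mA mf fK f0.
apply: (@le_integrable _ _ _ mu A mA (EFin \o f) (fun y : R => ((`|K|)%:E * (\1_(`[-r, r]%classic : set R) y : R)%:E)%E)).
- exact/measurable_EFinP.
- move=> y Ay /=; rewrite lee_fin normrM normr_id indicE.
  have [yr|yr] := lerP `|y| r.
  + rewrite mem_set; last by rewrite /= in_itv /= -ler_norml.
    rewrite normr1 mulr1; exact: (le_trans (fK y Ay) (ler_norm K)).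
  + rewrite f0 // normr0 memNset ?normr0 ?mulr0 //.
    by rewrite /= in_itv /= -ler_norml; apply/negP; rewrite -ltNge.
- apply: (@integrableS _ _ _ mu setT A) => //.
  apply: integrableZl => //; exact: integrable_indic_itv.
Qed.

Lemma setC_itv_dist (x e : R) : ~` `[x - e, x + e] = [set y | e < `|x - y|].
Proof.
apply/funext => y; apply/propext; rewrite /= in_itv /= ltNge ler_distlC.
by split => [/negP|/negP].
Qed.

Lemma cut_bound (A : set R) (f : R -> R) (x e K : R) : measurable A ->
  mu.-integrable A (EFin \o f) -> 0 < e -> `[x - e, x + e] `<=` A ->
  (forall y, A y -> `|f y| <= K) ->
  `|\int[mu]_(y in A) f y - \int[mu]_(y in A `&` [set y | e < `|x - y|]) f y|
    <= K * (e *+ 2).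
Proof.
move=> mA iA e0 TA fK.
set T : set R := `[x - e, x + e]%classic.
have mT : measurable T by rewrite /T; exact: measurable_itv.
have mS : measurable (A `&` [set y | e < `|x - y|]).
  by rewrite -setC_itv_dist; apply: measurableI => //; exact: measurableC.
have AE : A = (A `&` [set y | e < `|x - y|]) `|` T.
  by rewrite -setC_itv_dist -setDE setUC setDUK.
have iT : mu.-integrable T (EFin \o f) by exact: integrableS iA.
rewrite {1}AE Rintegral_setU //; last 2 first.
  by rewrite -AE.
  by rewrite -setC_itv_dist; apply/disj_setPS => y [[_ +] ?].
rewrite addrAC subrr add0r.
rewrite (le_trans (@le_normr_Rintegral _ _ _ mu T f mT iT)) //.
have iK : mu.-integrable T (EFin \o cst K).
  apply: measurable_bounded_integrable => //.
    change (mu (`[(x - e)%R, (x + e)%R]%classic : set R) < +oo)%E.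
    by rewrite lebesgue_measure_itv /=; case: ifP => // _; rewrite -EFinB ltry.
  exact: bounded_cst.
rewrite (le_trans (@le_Rintegral _ _ _ mu T _ _ mT (integrable_norm iT) iK _)) //.
  by move=> y Ty; apply: fK; exact: TA.
rewrite Rintegral_cst //.
change (K * fine (mu (`[(x - e)%R, (x + e)%R]%classic : set R)) <= K * (e *+ 2)).
rewrite lebesgue_measure_itv /= lte_fin ltrD2l gtrN // -EFinD /=.
have -> : x + e - (x - e) = e *+ 2 by rewrite mulr2n; ring.
by [].
Qed.

Lemma dsub (x y : R) : is_derive y 1 (fun t : R => x - t) (-1).
Proof.
have := @is_deriveB _ _ _ (cst x) id y 1 0 1 _ _.
rewrite sub0r => h; exact: h.
Qed.
Lemma dF (x y : R) : y < x -> is_derive y 1 (fun t : R => - @ln R (x - t)) ((x - y)^-1).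
Proof.
move=> yx.
have h : is_derive y 1 (@ln R \o (fun t => x - t)) ((x - y)^-1 * (-1)).
  apply: is_derive1_comp; last exact: dsub.
  by apply: is_derive1_ln; rewrite subr_gt0.
have := @is_deriveN _ _ _ _ y 1 _ h.
by rewrite mulrN1 opprK.
Qed.
Lemma dG (x y : R) : x < y -> is_derive y 1 (fun t : R => - @ln R (t - x)) ((x - y)^-1).
Proof.
move=> yx.
have h : is_derive y 1 (@ln R \o (fun t => t - x)) ((y - x)^-1 * 1).
  apply: is_derive1_comp; last first.
    have := @is_deriveB _ _ _ id (cst x) y 1 1 0 _ _; rewrite subr0 => h0; exact: h0.
  by apply: is_derive1_ln; rewrite subr_gt0.
have := @is_deriveN _ _ _ _ y 1 _ h.
by rewrite mulr1 -invrN opprB.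
Qed.


Lemma cont_of_derive (f : R -> R) (y d : R) : is_derive y 1 f d -> {for y, continuous f}.
Proof. by move=> h; apply/differentiable_continuous/derivable1_diffP; exact: (@ex_derive _ _ _ _ _ _ _ h). Qed.

Lemma int_left (x a e : R) : 0 < e -> a < x - e ->
  \int[mu]_(y in `[a, x - e]) (x - y)^-1 = ln (x - a) - ln e.
Proof.
move=> e0 ae.
rewrite /Rintegral (@continuous_FTC2 _ _ (fun y => - @ln R (x - y))) //.
- rewrite -EFinB /=; have -> : x - (x - e) = e by ring.
  ring.
- apply: continuous_in_subspaceT => y; rewrite inE /= in_itv /= => /andP[_ yb].
  apply: cvgV; first by rewrite subr_eq0; apply/eqP => h; move: yb; rewrite -h; lra.
  by apply: cvgB; [exact: cvg_cst | exact: cvg_id].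
- split.
  + move=> y; rewrite in_itv /= => /andP[_ yb].
    have h : y < x by lra.
    exact: (@ex_derive _ _ _ _ _ _ _ (dF h)).
  + have h : a < x by lra.
    apply: cvg_at_right_filter; exact: (cont_of_derive (dF h)).
  + have h : x - e < x by lra.
    apply: cvg_at_left_filter; exact: (cont_of_derive (dF h)).
- move=> y; rewrite in_itv /= => /andP[_ yb]; rewrite derive1E.
  have h : y < x by lra.
  exact: (@derive_val _ _ _ _ _ _ _ (dF h)).
Qed.

Lemma int_right (x b e : R) : 0 < e -> x + e < b ->
  \int[mu]_(y in `[x + e, b]) (x - y)^-1 = ln e - ln (b - x).
Proof.
move=> e0 ae.
rewrite /Rintegral (@continuous_FTC2 _ _ (fun y => - @ln R (y - x))) //.
- rewrite -EFinB /=; have -> : x + e - x = e by ring.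
  ring.
- apply: continuous_in_subspaceT => y; rewrite inE /= in_itv /= => /andP[yb _].
  apply: cvgV; first by rewrite subr_eq0; apply/eqP => h; move: yb; rewrite -h; lra.
  by apply: cvgB; [exact: cvg_cst | exact: cvg_id].
- split.
  + move=> y; rewrite in_itv /= => /andP[yb _].
    have h : x < y by lra.
    exact: (@ex_derive _ _ _ _ _ _ _ (dG h)).
  + have h : x < x + e by lra.
    apply: cvg_at_right_filter; exact: (cont_of_derive (dG h)).
  + have h : x < b by lra.
    apply: cvg_at_left_filter; exact: (cont_of_derive (dG h)).
- move=> y; rewrite in_itv /= => /andP[yb _]; rewrite derive1E.
  have h : x < y by lra.
  exact: (@derive_val _ _ _ _ _ _ _ (dG h)).
Qed.


Lemma cvg_by_bound (f : R -> R) l C :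
  (\forall e \near 0^'+, `|l - f e| <= C * e) -> f e @[e --> 0^'+] --> l.
Proof.
move=> h; apply/cvgrPdist_le => eps eps0.
have C1 : 0 < `|C| + 1 by rewrite ltr_wpDl.
near=> e.
have e0 : 0 < e by near: e; exact: nbhs_right_gt.
have ee : e < eps / (`|C| + 1) by near: e; apply: nbhs_right_lt; rewrite divr_gt0.
have he : `|l - f e| <= C * e by near: e; exact: h.
apply: (le_trans he); rewrite ltr_pdivlMr // in ee.
apply: (le_trans (ler_wpM2r (ltW e0) (ler_norm C))); apply: ltW; apply: le_lt_trans ee.
by rewrite mulrDr mulr1 mulrC lerDl ltW.
Unshelve. all: by end_near.
Qed.

Lemma Rint_restrict (A E : set R) (f : R -> R) :
  (forall y, A y -> ~ E y -> f y = 0) ->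
  \int[mu]_(y in A) f y = \int[mu]_(y in A `&` E) f y.
Proof.
move=> h; rewrite Rintegral_mkcond [RHS]Rintegral_mkcond; congr (Rintegral _ _ _).
apply/funext => y; rewrite !patchE.
have [Ay|nAy] := pselect (A y).
- rewrite (mem_set Ay); have [Ey|nEy] := pselect (E y).
  + by rewrite mem_set.
  + by rewrite memNset ?h // => -[].
- by rewrite !memNset // => -[].
Qed.

Lemma meas_inv (x : R) (A : set R) : measurable A -> A `<=` [set y | y != x] ->
  measurable_fun A (fun y => (x - y)^-1).
Proof.
move=> mA Ax; apply: (@measurable_funS _ _ _ _ [set y | y != x]) => //.
  apply: open_measurable; exact: open_neq.
apply: open_continuous_measurable_fun; first exact: open_neq.
move=> y; rewrite inE /= => yx.
apply: cvgV; first by rewrite subr_eq0 eq_sym.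
by apply: cvgB; [exact: cvg_cst | exact: cvg_id].
Qed.

Lemma dist_neq (x e y : R) : 0 <= e -> e < `|x - y| -> y != x.
Proof. by move=> e0 h; apply/eqP => yx; move: h; rewrite yx subrr normr0 ltNge e0. Qed.

Lemma int_inv (x a b e : R) (A : set R) : 0 < e -> measurable A ->
  A `<=` `[a, b] `&` [set y | e < `|x - y|] ->
  mu.-integrable A (EFin \o (fun y => (x - y)^-1)).
Proof.
move=> e0 mA AS.
apply: (@int_bdd A _ e^-1 (`|a| + `|b|)) => //.
- apply: meas_inv => // y /AS [_]; exact: dist_neq (ltW e0).
- move=> y /AS [_ /= h]; rewrite normfV lef_pV2 ?ltW //; rewrite posrE //.
  exact: lt_trans h.
- move=> y /AS [/= + _]; rewrite in_itv /= => /andP[ay yb] hy.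
  have h1 : -a <= `|a| by rewrite -normrN ler_norm.
  have h2 := normr_ge0 b; have h3 := ler_norm b; have h4 := normr_ge0 a.
  by move: hy; rewrite ltr_normr => /orP[] h; exfalso; lra.
Qed.

Lemma J_lemma (x a b e : R) : 0 < e -> a < x - e -> x + e < b ->
  \int[mu]_(y in `[a, b] `&` [set y | e < `|x - y|]) (x - y)^-1 = ln (x - a) - ln (b - x).
Proof.
move=> e0 ae eb.
have SE : `[a, b] `&` [set y | e < `|x - y|] = `[a, x - e[ `|` `]x + e, b].
  apply/funext => y; apply/propext; rewrite /= !in_itv /= ltr_normr opprB.
  split.
  - move=> [/andP[ay yb] /orP[h|h]].
    + by left; apply/andP; split => //; lra.
    + by right; apply/andP; split => //; lra.
  - move=> [/andP[ay yb]|/andP[ay yb]]; split.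
    + by apply/andP; split => //; lra.
    + by apply/orP; left; lra.
    + by apply/andP; split => //; lra.
    + by apply/orP; right; lra.
have iS : mu.-integrable (`[a, b] `&` [set y | e < `|x - y|]) (EFin \o (fun y => (x - y)^-1)).
  by apply: (@int_inv x a b e) => //; rewrite -setC_itv_dist; apply: measurableI => //; exact: measurableC.
rewrite SE Rintegral_setU //; last 2 first.
  by rewrite -SE.
  by apply/disj_setPS => y [/=]; rewrite !in_itv /= => /andP[_ h1] /andP[h2 _]; lra.
rewrite Rintegral_itv_bndo_bndc; last first.
  apply: (integrableS _ _ _ iS) => //.
    by rewrite -setC_itv_dist; apply: measurableI => //; exact: measurableC.
  by rewrite SE; exact: subsetUl.
rewrite Rintegral_itv_obnd_cbnd; last first.
  apply: (integrableS _ _ _ iS) => //.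
    by rewrite -setC_itv_dist; apply: measurableI => //; exact: measurableC.
  by rewrite SE; exact: subsetUr.
rewrite int_left // int_right //; ring.
Qed.

End Helpers.

Section Main.
Variable R : realType.
Variable Phi : R -> R -> R.
Hypothesis cPhi : continuous (fun p : R * R => Phi p.1 p.2).
Let Py x y := derive1 (fun t => Phi x t) y.
Hypothesis cPy : continuous (fun p : R * R => Py p.1 p.2).
Hypothesis dPhi : forall x y, derivable (fun t => Phi x t) y 1.

Lemma Phi_cvg (T : Type) (F : set_system T) (FF : Filter F) (f g : T -> R) a b :
  f @ F --> a -> g @ F --> b -> (fun t => Phi (f t) (g t)) @ F --> Phi a b.
Proof. move=> fa gb. have := (@continuous2_cvg _ _ _ _ F FF f g Phi a b).
move=> H; apply: H => //. exact: (@cPhi (a,b)).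
Qed.

Lemma Py_cvg (T : Type) (F : set_system T) (FF : Filter F) (f g : T -> R) a b :
  f @ F --> a -> g @ F --> b -> (fun t => Py (f t) (g t)) @ F --> Py a b.
Proof. move=> fa gb. have := (@continuous2_cvg _ _ _ _ F FF f g Py a b).
move=> H; apply: H => //. exact: (@cPy (a,b)).
Qed.

Lemma cPhi_y x : continuous (fun t => Phi x t).
Proof. by move=> t; apply: Phi_cvg; [exact: cvg_cst | exact: cvg_id]. Qed.

Lemma MVT_Phi x y z : y < z ->
  exists2 c, c \in `]y, z[ & Phi x z - Phi x y = Py x c * (z - y).
Proof.
move=> yz; apply: MVT => //.
  move=> c _; rewrite /Py derive1E; apply: derivableP; exact: dPhi.
apply: derivable_within_continuous => t _; exact: dPhi.
Qed.

Lemma ball_prod_unused (p q : R * R) e : ball p e q <-> (`|p.1 - q.1| < e /\ `|p.2 - q.2| < e).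
Proof. by case: p q => [a b] [c d]; rewrite /ball /= /prod_ball /=. Qed.


Definition D x y := if y == x then - Py x x else (Phi x y - Phi x x) / (x - y).

Lemma Dxi x y : exists c, ((x <= c <= y) || (y <= c <= x)) /\ D x y = - Py x c.
Proof.
rewrite /D; have [->|yx] := eqVneq y x; first by exists x; rewrite lexx.
have xy0 : x - y != 0 by rewrite subr_eq0 eq_sym.
case: (ltgtP x y) => [xy|xy|xy]; last by rewrite xy eqxx in yx.
- have [c + ec] := MVT_Phi x xy; rewrite in_itv /= => /andP[c1 c2].
  exists c; rewrite (ltW c1) (ltW c2) /=; split => //.
  rewrite ec; field; done.
- have [c + ec] := MVT_Phi x xy; rewrite in_itv /= => /andP[c1 c2].
  exists c; rewrite (ltW c1) (ltW c2) orbT; split => //.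
  rewrite -[Phi x y - Phi x x]opprB ec; field; done.
Qed.

Lemma D_diag p e : 0 < e -> exists2 d, 0 < d &
  forall x t, `|x - p| < d -> `|t - p| < d -> `|D x t + Py p p| < e.
Proof.
move=> e0; have := @cPy (p, p); move/cvgrPdist_lt => /(_ e e0).
move/nbhs_ballP => [d /= d0 Hd]; exists d => // x t xp tp.
have [c [cb ->]] := Dxi x t.
have : ball (p, p) d (x, c).
  split => /=; first by rewrite /ball /= distrC.
  move: xp tp; rewrite !ltr_distl => /andP[x1 x2] /andP[t1 t2].
  rewrite /ball /= ltr_distl.
  by case/orP: cb => /andP[c1 c2]; apply/andP; split; lra.
by move/Hd => /=; rewrite addrC.
Qed.


Lemma near_neq (a b : R) : a != b -> \forall y \near a, y != b.
Proof.
move=> ab; apply/nbhs_ballP; exists `|a - b|; first by rewrite /= normr_gt0 subr_eq0.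
move=> y /=; rewrite /ball /=; apply: contraTneq => ->; by rewrite ltxx.
Qed.

Lemma D_cont_y x : continuous (D x).
Proof.
move=> y0; have [->|y0x] := eqVneq y0 x.
- apply/cvgrPdist_lt => e e0; have [d d0 Hd] := D_diag x e0.
  apply/nbhs_ballP; exists d => // t /=; rewrite /ball /= => xt.
  have -> : D x x = - Py x x by rewrite /D eqxx.
  rewrite -opprD normrN addrC; apply: Hd; by rewrite ?subrr ?normr0 // distrC.
- have ey : {near y0, (fun y => (Phi x y - Phi x x) / (x - y)) =1 D x}.
    near=> y; rewrite /D ifF //; apply/negbTE; near: y; exact: near_neq.
  apply: cvg_trans (near_eq_cvg ey) _.
  have -> : D x y0 = (Phi x y0 - Phi x x) / (x - y0) by rewrite /D ifF // (negbTE y0x).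
  apply: cvgM; first by apply: cvgB; [exact: cPhi_y | exact: cvg_cst].
  apply: cvgV; first by rewrite subr_eq0 eq_sym.
  by apply: cvgB; [exact: cvg_cst | exact: cvg_id].
Unshelve. all: by end_near.
Qed.

Lemma D_cont_x y : continuous (fun x => D x y).
Proof.
move=> x0; have [->|x0y] := eqVneq x0 y.
- apply/cvgrPdist_lt => e e0; have [d d0 Hd] := D_diag y e0.
  apply/nbhs_ballP; exists d => // t /=; rewrite /ball /= => xt.
  have -> : D y y = - Py y y by rewrite /D eqxx.
  rewrite -opprD normrN addrC; apply: Hd; by rewrite ?subrr ?normr0 // distrC.
- have ey : {near x0, (fun x => (Phi x y - Phi x x) / (x - y)) =1 (fun x => D x y)}.
    near=> x; rewrite /D ifF //; apply/negbTE; rewrite eq_sym; near: x; exact: near_neq.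
  apply: cvg_trans (near_eq_cvg ey) _.
  have -> : D x0 y = (Phi x0 y - Phi x0 x0) / (x0 - y) by rewrite /D ifF // eq_sym (negbTE x0y).
  apply: cvgM.
    apply: cvgB; apply: Phi_cvg; by [exact: cvg_id | exact: cvg_cst].
  apply: cvgV; first by rewrite subr_eq0.
  by apply: cvgB; [exact: cvg_id | exact: cvg_cst].
Unshelve. all: by end_near.
Qed.

Local Notation mu := (@lebesgue_measure R).
Variable M : R.
Hypothesis M0 : 0 <= M.
Hypothesis Phi0 : forall x y, M < `|x| \/ M < `|y| -> Phi x y = 0.
Variables B L : R.
Hypothesis PhiB : forall x y, `|Phi x y| <= B.
Hypothesis PyL : forall x y, `|x| <= M + 2 -> `|y| <= M + 2 -> `|Py x y| <= L.

Lemma D_bound x y : `|x| <= M + 2 -> `|y| <= M + 2 -> `|D x y| <= L.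
Proof.
move=> hx hy; have [z [zb ->]] := Dxi x y; rewrite normrN; apply: PyL => //.
move: hx hy; rewrite !ler_norml => /andP[x1 x2] /andP[y1 y2].
by case/orP: zb => /andP[z1 z2]; apply/andP; split; lra.
Qed.

Lemma D_meas x : measurable_fun setT (D x).
Proof. apply: continuous_measurable_fun; exact: D_cont_y. Qed.

Lemma int_D x (A : set R) : measurable A -> A `<=` `[-(M + 2), M + 2] -> `|x| <= M + 2 ->
  mu.-integrable A (EFin \o D x).
Proof.
move=> mA AS hx; apply: (@int_bdd _ A _ L (M + 2)) => //.
- by apply: (measurable_funS measurableT) => //; exact: D_meas.
- by move=> y /AS; rewrite /= in_itv /= -ler_norml => hy; exact: D_bound.
- by move=> y /AS; rewrite /= in_itv /= -ler_norml => h1 h2; move: h1; rewrite leNgt h2.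
Qed.

Definition Ie e x := \int[mu]_(y in [set y | e < `|x - y|]) (Phi x y / (x - y)).
Definition Gx x := \int[mu]_(y in `[-(M + 2), M + 2]) D x y +
  Phi x x * (ln (x + (M + 2)) - ln (M + 2 - x)).

Lemma Ie_zero e x : M < `|x| -> Ie e x = 0.
Proof.
move=> hx; rewrite /Ie (@eq_Rintegral _ _ _ _ _ (fun _ => 0)).
  by rewrite Rintegral_cst ?mul0r //; rewrite -setC_itv_dist; exact: measurableC.
by move=> y _; rewrite Phi0 ?mul0r //; left.
Qed.

Lemma Ie_decomp e x : `|x| < M + 1 -> 0 < e -> e < 1 ->
  Ie e x = \int[mu]_(y in `[-(M + 2), M + 2] `&` [set y | e < `|x - y|]) D x y +
           Phi x x * (ln (x + (M + 2)) - ln (M + 2 - x)).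
Proof.
move=> hx e0 e1.
have mS : measurable (`[-(M + 2), M + 2] `&` [set y | e < `|x - y|]).
  by rewrite -setC_itv_dist; apply: measurableI => //; exact: measurableC.
have hx' := hx; rewrite ltr_norml in hx'; case/andP: hx' => x1 x2.
rewrite /Ie (@Rint_restrict _ _ `[-(M + 2), M + 2]); last first.
  move=> y _ /=; rewrite in_itv /= -ler_norml => hy; rewrite Phi0 ?mul0r //; right.
  by rewrite ltNge; apply/negP => h; apply: hy; apply: (le_trans h); lra.
rewrite setIC.
have -> : \int[mu]_(y in `[-(M + 2), M + 2] `&` [set y | e < `|x - y|]) (Phi x y / (x - y)) =
  \int[mu]_(y in `[-(M + 2), M + 2] `&` [set y | e < `|x - y|]) (D x y + Phi x x * (x - y)^-1).
  apply: eq_Rintegral => y; rewrite inE => -[_ /= hy]; have yx := dist_neq (ltW e0) hy.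
  rewrite /D ifF; last exact/negbTE.
  have : x - y != 0 by rewrite subr_eq0 eq_sym.
  by move=> h; field.
rewrite RintegralD //; last 2 first.
  apply: int_D; [exact: mS | exact: subIsetl | ].
  by apply: ltW; apply: (lt_le_trans hx); lra.
  have hi : mu.-integrable (`[-(M + 2), M + 2] `&` [set y | e < `|x - y|])
      (fun y => ((Phi x x)%:E * ((x - y)^-1)%:E)%E).
    apply: integrableZl; first by rewrite -setC_itv_dist; apply: measurableI => //; exact: measurableC.
    exact: (@int_inv _ x (-(M + 2)) (M + 2) e _ e0 mS (@subset_refl _ _)).
  apply: (eq_integrable _ _ _ _ hi); first by rewrite -setC_itv_dist; apply: measurableI => //; exact: measurableC.
  by move=> y _ /=; rewrite EFinM.
rewrite RintegralZl //; last by apply: (@int_inv _ x (-(M + 2)) (M + 2) e).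
rewrite J_lemma //; last 2 first.
  lra.
  lra.
by rewrite opprK.
Qed.

Lemma Ie_cvg_in x : `|x| < M + 1 -> Ie e x @[e --> 0^'+] --> Gx x.
Proof.
move=> hx; have hx' := hx; rewrite ltr_norml in hx'; case/andP: hx' => x1 x2.
apply: (@cvg_by_bound _ _ _ (L *+ 2)).
near=> e.
have e0 : 0 < e by near: e; exact: nbhs_right_gt.
have e1 : e < 1 by near: e; apply: nbhs_right_lt; exact: ltr01.
have E : forall a b k : R, a + k - (b + k) = a - b by move=> ? ? ?; ring.
rewrite Ie_decomp // /Gx E.
have mA : measurable (`[-(M + 2), M + 2]%classic : set R) by [].
apply: le_trans (@cut_bound _ `[-(M + 2), M + 2] (D x) x e L mA _ e0 _ _) _.
- apply: int_D => //; rewrite ler_norml; apply/andP; split; lra.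
- by move=> y /=; rewrite !in_itv /= => /andP[h1 h2]; apply/andP; split; lra.
- by move=> y /=; rewrite in_itv /= -ler_norml => hy; apply: D_bound => //; rewrite ler_norml; apply/andP; split; lra.
- by rewrite mulrnAr -mulrnAl.
Unshelve. all: by end_near.
Qed.

Lemma Ie_cvg_out x : M < `|x| -> Ie e x @[e --> 0^'+] --> 0.
Proof.
move=> hx; rewrite (_ : (fun e => Ie e x) = fun=> 0); first exact: cvg_cst.
by apply/funext => e; exact: Ie_zero.
Qed.

Lemma H_in x : `|x| < M + 1 -> hilbert_y Phi x x = Gx x.
Proof. move=> hx; exact: (cvg_lim (@Rhausdorff R) (Ie_cvg_in hx)). Qed.

Lemma H_out x : M < `|x| -> hilbert_y Phi x x = 0.
Proof. move=> hx; exact: (cvg_lim (@Rhausdorff R) (Ie_cvg_out hx)). Qed.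

Lemma Ie_to_H x : Ie e x @[e --> 0^'+] --> hilbert_y Phi x x.
Proof.
case: (lerP `|x| M) => hx.
- have hx1 : `|x| < M + 1 by lra.
  by rewrite H_in //; exact: Ie_cvg_in.
- by rewrite H_out //; exact: Ie_cvg_out.
Qed.

Lemma Gx_cont x : `|x| < M + 1 -> {for x, continuous Gx}.
Proof.
move=> hx; have hx' := hx; rewrite ltr_norml in hx'; case/andP: hx' => x1 x2.
have hxI : x \in (`]-(M + 1), M + 1[%classic : set R) by rewrite inE /= in_itv /= x1 x2.
have h1 : {in (`]-(M + 1), M + 1[%classic : set R),
    continuous (fun l => \int[mu]_(y in `[-(M + 2), M + 2]) D l y)}.
  apply: (@continuity_under_integral R _ _ mu D _ _ _ _ _ _ (cst L)).
  - exact: measurable_itv.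
  - move=> t /=; rewrite in_itv /= => /andP[t1 t2]; apply: int_D => //.
    by rewrite ler_norml; apply/andP; split; lra.
  - by apply: aeW => y _ t _; exact: D_cont_x.
  - apply: measurable_bounded_integrable => //.
      change (mu (`[(-(M + 2))%R, (M + 2)%R]%classic : set R) < +oo)%E.
      by rewrite lebesgue_measure_itv /=; case: ifP => // _; rewrite -EFinB ltry.
    exact: bounded_cst.
  - move=> t /=; rewrite in_itv /= => /andP[t1 t2]; apply: aeW => y /=.
    rewrite in_itv /= -ler_norml => hy; apply: D_bound => //.
    by rewrite ler_norml; apply/andP; split; lra.
rewrite /continuous_at /Gx.
apply: cvgD; first exact: h1.
apply: cvgM; first by apply: Phi_cvg; exact: cvg_id.
apply: cvgB.
- have h2 : (fun t => t + (M + 2)) @ x --> x + (M + 2).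
    by apply: cvgD; [exact: cvg_id | exact: cvg_cst].
  have p : 0 < x + (M + 2) by lra.
  exact: (cvg_comp _ _ h2 (continuous_ln p)).
- have h2 : (fun t => M + 2 - t) @ x --> M + 2 - x.
    by apply: cvgB; [exact: cvg_cst | exact: cvg_id].
  have p : 0 < M + 2 - x by lra.
  exact: (cvg_comp _ _ h2 (continuous_ln p)).
Qed.

Lemma H_meas : measurable_fun setT (fun x => hilbert_y Phi x x).
Proof.
set O : set R := `]-(M + 1), M + 1[%classic.
have mO : measurable O by exact: measurable_itv.
rewrite -(setUv O); apply/measurable_funU => //; first exact: measurableC.
split.
- apply: (eq_measurable_fun Gx).
    move=> x; rewrite /O inE /= in_itv /= => /andP[x1 x2]; rewrite H_in //.
    by rewrite ltr_norml x1 x2.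
  apply: open_continuous_measurable_fun; first exact: interval_open.
  move=> x; rewrite /O inE /= in_itv /= => /andP[x1 x2]; apply: Gx_cont.
  by rewrite ltr_norml x1 x2.
- apply: (eq_measurable_fun (cst (0 : R))); last exact: measurable_cst.
  move=> x; rewrite /O inE /= in_itv /= => hx; rewrite H_out //.
  rewrite ltNge ler_norml; apply/negP => /andP[x1 x2]; apply: hx; apply/andP; split; lra.
Qed.

Lemma F_bound (phi : R -> R) : continuous phi ->
  exists K, 0 <= K /\ forall x, `|phi x * hilbert_y Phi x x| <= K.
Proof.
move=> cphi.
have [K [K0 HK]] : exists K, 0 <= K /\ forall x, `|x| <= M -> `|phi x * Gx x| <= K.
  apply: bound1 => x hx; apply: cvgM; first exact: cphi.
  by apply: Gx_cont; lra.
exists K; split => // x; case: (lerP `|x| M) => hx.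
- by rewrite H_in; [exact: HK | lra].
- by rewrite H_out // mulr0 normr0.
Qed.

Lemma F_int (phi : R -> R) : continuous phi ->
  mu.-integrable setT (EFin \o (fun x => phi x * hilbert_y Phi x x)).
Proof.
move=> cphi; have [K [K0 HK]] := F_bound cphi.
apply: (@int_bdd _ _ _ K M) => //.
- apply: measurable_funM; last exact: H_meas.
  exact: continuous_measurable_fun.
- by move=> y _ hy; rewrite H_out // mulr0.
Qed.

Lemma phiI (phi : R -> R) e x : 0 < e ->
  \int[mu]_(y in [set y | e < `|x - y|]) (phi x * Phi x y / (x - y)) = phi x * Ie e x.
Proof.
move=> e0.
have mA : measurable [set y | e < `|x - y|] by rewrite -setC_itv_dist; exact: measurableC.
have -> : \int[mu]_(y in [set y | e < `|x - y|]) (phi x * Phi x y / (x - y)) =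
   \int[mu]_(y in [set y | e < `|x - y|]) (phi x * (Phi x y / (x - y))).
  by apply: eq_Rintegral => y _; rewrite mulrA.
rewrite RintegralZl //.
apply: (@int_bdd _ _ _ (B / e) M) => //.
- apply: measurable_funM.
    apply: (measurable_funS measurableT) => //.
    by apply: continuous_measurable_fun; exact: cPhi_y.
  by apply: meas_inv => // y /= hy; exact: dist_neq (ltW e0) hy.
- move=> y /= hy; rewrite normrM normfV.
  apply: ler_pM => //.
  by rewrite lef_pV2 ?posrE ?(lt_trans e0 hy) // ltW.
- by move=> y _ hy; rewrite Phi0 ?mul0r //; right.
Qed.

Lemma hphi (phi : R -> R) x :
  hilbert_y (fun x y => phi x * Phi x y) x x = phi x * hilbert_y Phi x x.
Proof.
apply: (cvg_lim (@Rhausdorff R)).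
have ey : {near 0^'+, (fun e => phi x * Ie e x) =1
   (fun e => \int[mu]_(y in [set y | e < `|x - y|]) (phi x * Phi x y / (x - y)))}.
  near=> e; rewrite phiI //; near: e; exact: nbhs_right_gt.
apply: cvg_trans (near_eq_cvg ey) _.
by apply: cvgM; [exact: cvg_cst | exact: Ie_to_H].
Unshelve. all: by end_near.
Qed.

Lemma pv_part (phi : R -> R) : continuous phi ->
  pv_inv (fun x => phi x * (x * hilbert_y Phi x x)) =
  \int[mu]_(x in [set: R]) (phi x * hilbert_y Phi x x).
Proof.
move=> cphi; have [K [K0 HK]] := F_bound cphi.
apply: (cvg_lim (@Rhausdorff R)).
set F := fun x => phi x * hilbert_y Phi x x.
have ey : {near 0^'+, (fun e => \int[mu]_(y in [set: R] `&` [set y | e < `|0 - y|]) F y) =1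
   (fun e => \int[mu]_(x in [set x | e < `|x|]) (phi x * (x * hilbert_y Phi x x) / x))}.
  near=> e; rewrite setTI.
  have ep : 0 < e by near: e; exact: nbhs_right_gt.
  have -> : [set y : R | e < `|0 - y|] = [set x | e < `|x|].
    by apply/funext => y /=; rewrite sub0r normrN.
  apply: eq_Rintegral => y; rewrite inE /= => hy.
  have y0 : y != 0 by apply/eqP => y0; move: hy; rewrite y0 normr0 ltNge (ltW ep).
  by rewrite /F; field.
apply: cvg_trans (near_eq_cvg ey) _.
apply: (@cvg_by_bound _ _ _ (K *+ 2)).
near=> e.
have e0 : 0 < e by near: e; exact: nbhs_right_gt.
apply: le_trans (@cut_bound _ setT F 0 e K measurableT (F_int cphi) e0 _ _) _.
- by [].
- by move=> y _; exact: HK.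
- by rewrite mulrnAr -mulrnAl.
Unshelve. all: by end_near.
Qed.

Lemma Kir_cvg x : Kir e Phi x @[e --> 0^'+] --> x * hilbert_y Phi x x.
Proof.
have [->|x0] := eqVneq x 0.
- rewrite mul0r (_ : (fun e => Kir e Phi 0) = fun=> 0); first exact: cvg_cst.
  by apply/funext => e; rewrite /Kir sgr0 mulr0 if_same mul0r.
- have ey : {near 0^'+, (fun e => x * Ie e x) =1 (fun e => Kir e Phi x)}.
    near=> e; rewrite /Kir ifF //; apply/negbTE; rewrite -ltNge.
    by near: e; apply: nbhs_right_lt; rewrite normr_gt0.
  apply: cvg_trans (near_eq_cvg ey) _.
  by apply: cvgM; [exact: cvg_cst | exact: Ie_to_H].
Unshelve. all: by end_near.
Qed.

End Main.

Unset Implicit Arguments.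

Theorem proposition9p2 (R : realType) (Phi : R -> R -> R) :
  test2 Phi ->
  (forall x : R, Kir e Phi x @[e --> 0^'+] --> x * hilbert_y Phi x x) /\
  (forall phi : R -> R, test1 phi ->
     pv_inv (fun x => phi x * (x * hilbert_y Phi x x)) =
     S_pairing (fun x y => phi x * Phi x y)).
Proof.
move=> [sm [M0 hM]].
have cPhi : continuous (fun p : R * R => Phi p.1 p.2) := (sm [::]).2.
have cPy := (sm [:: false]).2.
have dPhi : forall x y, derivable (Phi x) y 1 := fun x y => ((sm [::]).1 x y).2.
set M := `|M0|.
have Phi0 : forall x y, M < `|x| \/ M < `|y| -> Phi x y = 0.
  move=> x y h; apply: hM; case: h => h; [left|right]; exact: le_lt_trans (ler_norm M0) h.
have [B0 [B00 HB0]] := @bound2 R (fun p => Phi p.1 p.2) M cPhi.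
have PhiB : forall x y, `|Phi x y| <= B0.
  move=> x y; case: (lerP `|x| M) => hx; case: (lerP `|y| M) => hy.
  - exact: HB0.
  - by rewrite Phi0 ?normr0 //; right.
  - by rewrite Phi0 ?normr0 //; left.
  - by rewrite Phi0 ?normr0 //; left.
have [L [_ PyL]] := @bound2 R _ (M + 2) cPy.
split.
- move=> x; exact: (Kir_cvg cPhi cPy dPhi Phi0 PyL).
- move=> phi [sphi _].
  have cphi : continuous phi.
    move=> x; apply/differentiable_continuous/derivable1_diffP; exact: (sphi 0%N x).
  rewrite /S_pairing (pv_part cPhi cPy dPhi Phi0 PyL cphi).
  apply: eq_Rintegral => x _.
  by rewrite (hphi cPhi cPy dPhi Phi0 PhiB PyL).
Qed.
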